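(* Let $\mathbf P=(P,\leq,{}',0,1)$ be an orthogonal poset which is a Boolean poset, where the antitone involution ${}'$ is the complementation of $P$ (i.e. $x'$ is the complement of $x$ for each $x\in P$). Then $\mathbf P$ is an orthomodular poset, i.e. for all $x,y\in P$ with $x\leq y$ we have $x\vee(y\wedge x')=y$.
   Context: For a subset $A$ of a poset $(P,\le)$, $L(A)=\{z\in P: z\le a \text{ for all } a\in A\}$ and $U(A)=\{z\in P: a\le z \text{ for all } a\in A\}$; we write $L(x,y)$ for $L(\{x,y\})$, $LU(A)$ for $L(U(A))$, $L(A,z)$ for $L(A\cup\{z\})$, etc. A bounded poset $(P,\le,{}',0,1)$ with an antitone involution means ${}'$ satisfies $x\le y\Rightarrow y'\le x'$ and $x''=x$. Elements $x,y$ are orthogonal, $x\perp y$, if $x\le y'$. The poset is orthogonal if $x\vee y$ (supremum) exists whenever $x\perp y$. An element $y$ is a complement of $x$ if $L(x,y)=L(P)$ and $U(x,y)=U(P)$; the poset is complemented if every element has a complement. The poset is distributive if $L(U(x,y),z)=LU(L(x,z),L(y,z))$ for all $x,y,z$ (equivalently any of the dual LU-identities), and Boolean if it is distributive and complemented. An orthomodular poset is an orthogonal poset satisfying: $x\le y$ implies $x\vee(y\wedge x')=y$ (here $y\wedge x'=(y'\vee x)'$ exists by orthogonality). *)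

(* Defs.v *)
Set Implicit Arguments.

Section PosetDefs.
Variable T : Type.
Variable le : T -> T -> Prop.

Definition setP : T -> Prop := fun _ => True.
Definition pair (x y : T) : T -> Prop := fun w => w = x \/ w = y.
Definition setU1 (A : T -> Prop) (z : T) : T -> Prop := fun w => A w \/ w = z.
Definition setUn (A B : T -> Prop) : T -> Prop := fun w => A w \/ B w.
Definition set_eq (A B : T -> Prop) : Prop := forall w, A w <-> B w.

Definition Lc (A : T -> Prop) : T -> Prop := fun z => forall a, A a -> le z a.
Definition Uc (A : T -> Prop) : T -> Prop := fun z => forall a, A a -> le a z.

Definition partial_order : Prop :=
  (forall x, le x x) /\
  (forall x y, le x y -> le y x -> x = y) /\
  (forall x y z, le x y -> le y z -> le x z).

Definition is_sup (x y s : T) : Prop :=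
  le x s /\ le y s /\ forall u, le x u -> le y u -> le s u.
Definition is_inf (x y m : T) : Prop :=
  le m x /\ le m y /\ forall u, le u x -> le u y -> le u m.

Definition bounded_poset_with_antitone_involution (c : T -> T) (z o : T) : Prop :=
  partial_order /\ (forall x, le z x /\ le x o) /\
  (forall x y, le x y -> le (c y) (c x)) /\ (forall x, c (c x) = x).

Definition orth (c : T -> T) (x y : T) : Prop := le x (c y).

Definition orthogonal_poset (c : T -> T) : Prop :=
  forall x y, orth c x y -> exists s, is_sup x y s.

Definition is_complement (x y : T) : Prop :=
  set_eq (Lc (pair x y)) (Lc setP) /\ set_eq (Uc (pair x y)) (Uc setP).

(* distributive: L(U(x,y), z) = LU(L(x,z), L(y,z)) *)
Definition distributive_poset : Prop :=
  forall x y z,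
    set_eq (Lc (setU1 (Uc (pair x y)) z))
           (Lc (Uc (setUn (Lc (pair x z)) (Lc (pair y z))))).

End PosetDefs.

(* Main.v *)
Require Import Defs.

Theorem lemma1 (T : Type) (le : T -> T -> Prop) (c : T -> T) (z o : T) :
  bounded_poset_with_antitone_involution le c z o ->
  orthogonal_poset le c ->
  distributive_poset le ->
  (forall x : T, is_complement le x (c x)) ->
  forall x y : T, le x y ->
    exists m : T, is_inf le y (c x) m /\ is_sup le x m y.
Proof.
  intros [[Hr [Ha Ht]] [Hb [Hc Hi]]] Ho Hd Hcomp x y Hxy.
  assert (Hx1 : orth le c x (c y)) by (unfold orth; rewrite Hi; exact Hxy).
  destruct (Ho _ _ Hx1) as [s [Hs1 [Hs2 Hs3]]].
  assert (Hinf : is_inf le y (c x) (c s)).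
  { split; [|split].
    - rewrite <- (Hi y). apply Hc. exact Hs2.
    - apply Hc. exact Hs1.
    - intros u Hu1 Hu2. rewrite <- (Hi u). apply Hc. apply Hs3.
      + rewrite <- (Hi x). apply Hc. exact Hu2.
      + apply Hc. exact Hu1. }
  exists (c s). split; [exact Hinf|].
  assert (Hx2 : orth le c x (c s)) by (unfold orth; rewrite Hi; exact Hs1).
  destruct (Ho _ _ Hx2) as [t [Ht1 [Ht2 Ht3]]].
  destruct Hinf as [Hm1 [Hm2 Hm3]].
  assert (Hty : le t y) by (apply Ht3; assumption).
  assert (Hyt : le y t).
  { destruct (Hd x (c x) y y) as [H1 _].
    apply H1.
    - intros a [Ha1 | Ha1].
      + destruct (Hcomp x) as [_ HU]. apply (proj1 (HU a)) in Ha1.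
        apply Ht with o. apply (Hb y). apply Ha1. exact I.
      + subst a. apply Hr.
    - intros w [Hw | Hw].
      + apply Ht with x; [apply Hw; left; reflexivity | exact Ht1].
      + apply Ht with (c s); [|exact Ht2].
        apply Hm3; apply Hw; [right|left]; reflexivity. }
  assert (t = y) by (apply Ha; assumption). subst t.
  split; [exact Ht1|split; [exact Ht2|exact Ht3]].
Qed.
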